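(* If $R$ is a GSWNC ring, then its Jacobson radical $J(R)$ is nil.
   Context: All rings are associative with identity. An element $a$ of a ring is strongly weakly nil-clean if there exist an idempotent $e$ and a nilpotent $q$ with $eq = qe$ such that $a = q + e$ or $a = q - e$. A ring is GSWNC if every non-invertible element is strongly weakly nil-clean. *)

(* Defs.v *)
From HB Require Import structures.
From mathcomp Require Import all_boot all_order all_algebra.
Set Implicit Arguments. Unset Strict Implicit. Unset Printing Implicit Defensive.
Import GRing.Theory.
Local Open Scope ring_scope.

Definition invertible (R : pzRingType) (a : R) : Prop :=
  exists b : R, a * b = 1 /\ b * a = 1.

Definition idempotent (R : pzRingType) (e : R) : Prop := e * e = e.

Definition nilpotent (R : pzRingType) (q : R) : Prop := exists n : nat, q ^+ n = 0.

Definition SWNC (R : pzRingType) (a : R) : Prop :=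
  exists e q : R, idempotent e /\ nilpotent q /\ e * q = q * e /\
    (a = q + e \/ a = q - e).

Definition GSWNC (R : pzRingType) : Prop :=
  forall a : R, ~ invertible a -> SWNC a.

Definition left_ideal (R : pzRingType) (I : R -> Prop) : Prop :=
  I 0 /\ (forall x y, I x -> I y -> I (x - y)) /\ (forall r x, I x -> I (r * x)).

Definition maximal_left_ideal (R : pzRingType) (M : R -> Prop) : Prop :=
  left_ideal M /\ ~ M 1 /\
  (forall I : R -> Prop, left_ideal I -> (forall x, M x -> I x) ->
     I 1 \/ (forall x, I x -> M x)).

Definition jacobson (R : pzRingType) : R -> Prop :=
  fun x => forall M : R -> Prop, maximal_left_ideal M -> M x.

Definition nil_set (R : pzRingType) (S : R -> Prop) : Prop :=
  forall x, S x -> nilpotent x.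

(* Main.v *)
Require Import Defs.
From mathcomp Require Import all_boot all_order all_algebra.
From mathcomp Require Import boolp classical_sets.
From Stdlib Require Import Classical.
Import GRing.Theory.
Local Open Scope ring_scope.

Section Aux.
Variable R : pzRingType.

Definition good (I A : R -> Prop) :=
  left_ideal A /\ (forall x, I x -> A x) /\ ~ A 1.

Lemma exists_max (I : R -> Prop) : left_ideal I -> ~ I 1 ->
  exists M, maximal_left_ideal M /\ (forall x, I x -> M x).
Proof.
move=> LI nI1.
pose P (A : set R) := (forall x, ~ A x) \/ good I A.
have PI : P I by right; split; [exact: LI| split; [by []| exact: nI1]].
have nonempty_good : forall A x, P A -> A x -> good I A.
  by move=> A x [H|H] Ax //; case: (H x Ax).
have [A [PA Amax]] : exists A, P A /\ forall B, (A `<` B)%classic -> ~ P B.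
  apply: Zorn_bigcup => F FP Ftot.
  case: (classic (exists x, (\bigcup_(X in F) X)%classic x)) => [[x0 [X0 FX0 X0x]]|Hn];
    last by left => x Ux; apply: Hn; exists x.
  have G0 := nonempty_good _ _ (FP _ FX0) X0x.
  right; split; last split.
  - case: G0 => -[I0 _] _; split; first by exists X0.
    split.
    + move=> x y [X FX Xx] [Y FY Yy].
      case: (Ftot X Y FX FY) => HXY.
      * have [[_ [Hs _]] _] := nonempty_good _ _ (FP _ FY) Yy.
        by exists Y => //; apply: Hs => //; apply: HXY.
      * have [[_ [Hs _]] _] := nonempty_good _ _ (FP _ FX) Xx.
        by exists X => //; apply: Hs => //; apply: HXY.
    + move=> r x [X FX Xx].
      have [[_ [_ Hm]] _] := nonempty_good _ _ (FP _ FX) Xx.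
      by exists X => //; apply: Hm.
  - by move=> x Ix; exists X0 => //; case: G0 => _ [H _]; apply: H.
  - move=> [X FX X1].
    by have [_ [_ H]] := nonempty_good _ _ (FP _ FX) X1.
have GA : good I A.
  case: PA => // Aempty; exfalso; apply: (Amax I) => //; split.
    by move=> x Ax; case: (Aempty x Ax).
  by move=> HIA; apply: (Aempty 0); apply: HIA; case: LI.
case: GA => LA [IA nA1].
exists A; split => //; split => //; split => // J LJ AJ.
case: (classic (J 1)) => [J1|nJ1]; first by left.
right => x Jx; apply: NNPP => nAx.
apply: (Amax J); first by split => // HJA; apply: nAx; apply: HJA.
by right; split => //; split => // y Iy; apply: AJ; apply: IA.
Qed.

Lemma geom_inv (q : R) : nilpotent q -> exists u, u * (1 - q) = 1.
Proof.
case=> n Hn; exists (\sum_(i < n) q ^+ i).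
have H : forall m, (\sum_(i < m) q ^+ i) * (1 - q) = 1 - q ^+ m.
  elim=> [|m IH]; first by rewrite big_ord0 mul0r expr0 subrr.
  rewrite big_ord_recr /= mulrDl IH mulrBr mulr1 -exprSr.
  by rewrite addrA subrK.
by rewrite H Hn subr0.
Qed.

End Aux.
Arguments exists_max {R I}.
Arguments geom_inv {R q}.

Theorem lemma2p10 (R : pzRingType) : GSWNC R -> nil_set (@jacobson R).
Proof.
move=> HG x Jx.
case: (classic ((1 : R) = 0)) => [h10|h10].
  by exists 1%N; rewrite expr1 -[x]mul1r h10 mul0r.
have L0 : left_ideal (fun y : R => y = 0).
  split => //; split; first by move=> ? ? -> ->; rewrite subrr.
  by move=> r ? ->; rewrite mulr0.
have ninv : ~ invertible x.
  move=> [b [_ Hbx]].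
  have [M [MM _]] := exists_max L0 h10.
  have Mx := Jx M MM.
  case: MM => [[_ [_ H]] [nM1 _]].
  by apply: nM1; rewrite -Hbx; apply: H.
have linv : forall r, exists s, s * (1 - r * x) = 1.
  move=> r; apply: NNPP => Hn.
  pose I := fun y : R => exists s, y = s * (1 - r * x).
  have LI : left_ideal I.
    split; first by exists 0; rewrite mul0r.
    split; first by move=> ? ? [s ->] [t ->]; exists (s - t); rewrite mulrBl.
    by move=> r' ? [s ->]; exists (r' * s); rewrite mulrA.
  have nI1 : ~ I 1 by move=> [s hs]; apply: Hn; exists s.
  have [M [MM IM]] := exists_max LI nI1.
  have Mx := Jx M MM.
  case: MM => [[_ [Msub Mmul]] [nM1 _]].
  apply: nM1.
  have H1 : M (1 - r * x) by apply: IM; exists 1; rewrite mul1r.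
  have H2 : M (r * x) by apply: Mmul.
  have := Msub _ _ H1 (Msub _ _ (Msub _ _ H2 H2) H2).
  by rewrite subrr sub0r opprK subrK.
have kill : forall e r, e = r * x * e -> e = 0.
  move=> e r He; have [s Hs] := linv r.
  by rewrite -[e]mul1r -Hs -mulrA mulrBl mul1r -He subrr mulr0.
have [e [q [He [Hq [Heq Hx]]]]] := HG x ninv.
suff e0 : e = 0 by move: Hx; rewrite e0 subr0 addr0 => -[->|->].
case: Hx => Hx.
- have Hnq : nilpotent (- q).
    by case: Hq => n Hn; exists n; rewrite exprNn Hn mulr0.
  have [u Hu] := geom_inv Hnq.
  apply: (kill e u).
  have xe : x * e = (1 - - q) * e.
    by rewrite Hx opprK mulrDl He mulrDl mul1r addrC.
  by rewrite -mulrA xe mulrA Hu mul1r.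
- have [u Hu] := geom_inv Hq.
  apply: (kill e (- u)).
  have xe : x * e = - ((1 - q) * e).
    by rewrite Hx mulrBl He mulrBl mul1r opprB.
  by rewrite -mulrA xe mulrN mulNr opprK mulrA Hu mul1r.
Qed.
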